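(* The topology automaton $M_K$ of a fractal gasket $K$ is a gasket automaton.
   Context: Let $\Delta\subset\mathbb R^2$ be the triangle with vertices $\omega_\alpha=(0,0)$, $\omega_\beta=(1,0)$, $\omega_\gamma=(1/2,\sqrt3/2)$. A fractal gasket is the attractor $K$ of $\{\varphi_j(z)=r_j(z+d_j)\}_{j=1}^N$, $r_j\in(0,1)$, $d_j\in\mathbb R^2$, with $\bigcup_j\varphi_j(\Delta)\subset\Delta$ and, for $i\neq j$, $\varphi_i(\Delta)\cap\varphi_j(\Delta)$ consisting only of common vertices. $\Sigma=\{1,\dots,N\}$; $\alpha=-1$ if $(0,0)\notin K$, else $\alpha$ is the index with $\varphi_\alpha((0,0))=(0,0)$; $\beta=-2$ or $\varphi_\beta$ fixes $(1,0)$; $\gamma=-3$ or $\varphi_\gamma$ fixes $\omega_\gamma$. Triangle automaton: state set $Q=\{S_{uv}:u\ne v\in\{\alpha,\beta,\gamma\}\}\cup\{Id,Exit\}$, input alphabet $\Sigma^2$, initial state $Id$, transition $\delta$ with $\delta(Id,(i,j))=Id$ iff $i=j$; $\delta(Id,(i,j))=S_{uv}\Rightarrow\delta(Id,(j,i))=S_{vu}$; $\delta(S_{uv},(i,j))=S_{uv}$ if $(i,j)=(v,u)$, else $Exit$. The topology automaton $M_K$ is the triangle automaton with, for $i\ne j$: $\delta(Id,(i,j))=S_{uv}$ if $u,v\in\Sigma$ and $\varphi_i(\omega_v)=\varphi_j(\omega_u)$; $\delta(Id,(i,j))=Exit$ if $\varphi_i(K)\cap\varphi_j(K)=\emptyset$.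 With $\mathcal P_{uv}=\{(i,j):\delta(Id,(i,j))=S_{uv}\}$, $i\triangleleft_{uv}j$ iff $(i,j)\in\mathcal P_{uv}$ (iff $j\triangleleft_{vu}i$), and $j$ $uv$-minimal iff no $i\triangleleft_{uv}j$: a gasket automaton is a triangle automaton with (Uniqueness) $i\triangleleft_{uv}j,i\triangleleft_{uv}j'\Rightarrow j=j'$; (Gathering) any two of $a\triangleleft_{\alpha\gamma}c$, $a\triangleleft_{\beta\gamma}b$, $b\triangleleft_{\alpha\beta}c$ imply the third; (Boundary) if $\alpha\in\Sigma$ it is $\alpha\gamma$- and $\alpha\beta$-minimal; if $\beta\in\Sigma$ it is $\beta\gamma$- and $\beta\alpha$-minimal; if $\gamma\in\Sigma$ it is $\gamma\alpha$- and $\gamma\beta$-minimal. *)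

(* Defs.v *)
From HB Require Import structures.
From mathcomp Require Import all_boot all_order all_algebra.
From mathcomp Require Import all_classical all_reals all_analysis.
Set Implicit Arguments. Unset Strict Implicit. Unset Printing Implicit Defensive.
Import Order.TTheory GRing.Theory Num.Theory.
Import numFieldTopology.Exports numFieldNormedType.Exports.
Local Open Scope classical_set_scope.
Local Open Scope ring_scope.

Inductive vtx := VA | VB | VC.

Definition vtx_eqb (u v : vtx) : bool :=
  match u, v with VA, VA | VB, VB | VC, VC => true | _, _ => false end.
Lemma vtx_eqbP : Equality.axiom vtx_eqb.
Proof. by case; case; constructor. Qed.
HB.instance Definition _ := hasDecEq.Build vtx vtx_eqbP.

Section Geometry.
Variable R : realType.

Definition omega (u : vtx) : R * R :=
  match u with
  | VA => (0, 0)
  | VB => (1, 0)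
  | VC => (1 / 2, Num.sqrt 3 / 2)
  end.

Definition Delta : set (R * R) :=
  [set x | exists a b c : R, [/\ 0 <= a, 0 <= b, 0 <= c, a + b + c = 1 &
     x = (a * (omega VA).1 + b * (omega VB).1 + c * (omega VC).1,
          a * (omega VA).2 + b * (omega VB).2 + c * (omega VC).2)]].

Definition simil (r : R) (d : R * R) (z : R * R) : R * R :=
  (r * (z.1 + d.1), r * (z.2 + d.2)).

End Geometry.

Definition fractal_gasket (R : realType) (N : nat) (r : 'I_N -> R)
    (d : 'I_N -> R * R) (K : set (R * R)) : Prop :=
  [/\ (forall j, 0 < r j < 1),
      (forall j, simil (r j) (d j) @` @Delta R `<=` @Delta R),
      (forall i j, i != j -> forall x,
          (simil (r i) (d i) @` @Delta R) x -> (simil (r j) (d j) @` @Delta R) x ->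
          exists u v, x = simil (r i) (d i) (@omega R u) /\
                      x = simil (r j) (d j) (@omega R v)) &
      [/\ compact K, (K !=set0) &
           K = \bigcup_(j in [set: 'I_N]) (simil (r j) (d j) @` K)]].

(* The indices alpha, beta, gamma: None encodes -1,-2,-3 (vertex not in K);
   otherwise the index of the map fixing that vertex. *)
Definition corner (R : realType) (N : nat) (r : 'I_N -> R) (d : 'I_N -> R * R)
    (K : set (R * R)) (u : vtx) : option 'I_N :=
  if `[< K (@omega R u) >] then
    [pick j : 'I_N | simil (r j) (d j) (@omega R u) == @omega R u]
  else None.

Inductive state := QId | QExit | QS (p : {p : vtx * vtx | p.1 != p.2}).

Definition isS (q : state) (u v : vtx) : bool :=
  match q with QS p => val p == (u, v) | _ => false end.

Definition triangle_automaton (N : nat) (c : vtx -> option 'I_N)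
    (delta : state -> 'I_N * 'I_N -> state) : Prop :=
  [/\ (forall i j, delta QId (i, j) = QId <-> i = j),
      (forall i j u v, isS (delta QId (i, j)) u v -> isS (delta QId (j, i)) v u) &
      (forall p i j, delta (QS p) (i, j) =
          if (c (val p).2 == Some i) && (c (val p).1 == Some j) then QS p else QExit)].

Definition prec (N : nat) (delta : state -> 'I_N * 'I_N -> state)
    (u v : vtx) (i j : 'I_N) : Prop := isS (delta QId (i, j)) u v.

Definition gasket_automaton (N : nat) (c : vtx -> option 'I_N)
    (delta : state -> 'I_N * 'I_N -> state) : Prop :=
  let P := prec delta in
  [/\ triangle_automaton c delta,
      (forall u v i j j', P u v i j -> P u v i j' -> j = j'),
      (forall a b c0 : 'I_N,
          (P VA VC a c0 -> P VB VC a b -> P VA VB b c0) /\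
          (P VA VC a c0 -> P VA VB b c0 -> P VB VC a b) /\
          (P VB VC a b -> P VA VB b c0 -> P VA VC a c0)) &
      [/\ (forall a, c VA = Some a -> forall i, ~ P VA VC i a /\ ~ P VA VB i a),
          (forall b, c VB = Some b -> forall i, ~ P VB VC i b /\ ~ P VB VA i b) &
          (forall g, c VC = Some g -> forall i, ~ P VC VA i g /\ ~ P VC VB i g)]].

Definition topology_automaton (R : realType) (N : nat) (r : 'I_N -> R)
    (d : 'I_N -> R * R) (K : set (R * R))
    (delta : state -> 'I_N * 'I_N -> state) : Prop :=
  let c := corner r d K in
  triangle_automaton c delta /\
  forall i j : 'I_N, i != j ->
    (forall u v : vtx, u != v -> c u != None -> c v != None ->
        simil (r i) (d i) (@omega R v) = simil (r j) (d j) (@omega R u) ->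
        isS (delta QId (i, j)) u v) /\
    ((simil (r i) (d i) @` K) `&` (simil (r j) (d j) @` K) = set0 ->
        delta QId (i, j) = QExit).

(* Main.v *)
Require Import Defs.
From HB Require Import structures.
From mathcomp Require Import all_boot all_order all_algebra.
From mathcomp Require Import all_classical all_reals all_analysis.
From mathcomp Require Import ring lra.
Set Implicit Arguments. Unset Strict Implicit. Unset Printing Implicit Defensive.
Import Order.TTheory GRing.Theory Num.Theory.
Import numFieldTopology.Exports numFieldNormedType.Exports.
Local Open Scope classical_set_scope.
Local Open Scope ring_scope.
Section Geo.
Variable R : realType.
Local Notation s := (Num.sqrt 3 : R).
Local Notation D := (@Delta R).
Local Notation om := (@omega R).

Lemma s_gt0 : 0 < s. Proof. by rewrite sqrtr_gt0. Qed.
Lemma s_neq0 : s != 0. Proof. by rewrite gt_eqF // s_gt0. Qed.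
Lemma s2 : s * s = 3. Proof. by rewrite -expr2 sqr_sqrtr // ler0n. Qed.
Lemma s_ge1 : 1 <= s. Proof. have := s2; have := s_gt0; nra. Qed.

Definition lam (k : vtx) (p : R * R) : R :=
  match k with
  | VA => 1 - p.1 - p.2 / s
  | VB => p.1 - p.2 / s
  | VC => 2 * (p.2 / s)
  end.

Lemma lam_omega k w : lam k (om w) = if k == w then 1 else 0.
Proof. have := s_neq0; case: k; case: w => /= H; by field. Qed.

Lemma lam_sum p : lam VA p + lam VB p + lam VC p = 1.
Proof. have := s_neq0; rewrite /= => H; by field. Qed.

Lemma pt_lam p : p = (lam VB p + lam VC p / 2, lam VC p * s / 2).
Proof. have := s_neq0; case: p => x y /= H; congr pair; by field. Qed.

Lemma lam_eq u p q : (forall k, k != u -> lam k p = lam k q) -> p = q.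
Proof.
move=> H; rewrite (pt_lam p) (pt_lam q).
have [eB eC] : lam VB p = lam VB q /\ lam VC p = lam VC q.
  have := lam_sum p; have := lam_sum q.
  have hA := H VA; have hB := H VB; have hC := H VC.
  case: u H hA hB hC => H hA hB hC.
  - by rewrite hB ?hC.
  - have := hA isT; have := hC isT; split; lra.
  - have := hA isT; have := hB isT; split; lra.
by rewrite eB eC.
Qed.

Lemma DeltaP p : D p <-> forall k, 0 <= lam k p.
Proof.
split.
  case=> a [b [c [a0 b0 c0 abc ->]]] k.
  have := s_neq0 => H.
  have -> : lam k (a * (om VA).1 + b * (om VB).1 + c * (om VC).1,
          a * (om VA).2 + b * (om VB).2 + c * (om VC).2) =
     match k with VA => a | VB => b | VC => c end.
    case: k => /=; [rewrite -{1}abc|..]; by field.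
  by case: k.
move=> H; exists (lam VA p), (lam VB p), (lam VC p); split => //.
  exact: lam_sum.
rewrite {1}(pt_lam p) /=; have := s_neq0 => Hs.
congr pair; by field.
Qed.

Definition comb (t : R) (p q : R * R) : R * R :=
  (t * p.1 + (1 - t) * q.1, t * p.2 + (1 - t) * q.2).

Lemma lam_comb t p q k : lam k (comb t p q) = t * lam k p + (1 - t) * lam k q.
Proof. have := s_neq0; case: k => /= H; by field. Qed.

Lemma lam_simil r d y z k :
  lam k (simil r d y) - r * lam k y = lam k (simil r d z) - r * lam k z.
Proof. have := s_neq0; case: k => /= H; by field. Qed.

Lemma simil_comb r d t p q :
  simil r d (comb t p q) = comb t (simil r d p) (simil r d q).
Proof. rewrite /simil /comb /=; congr pair; ring. Qed.

Lemma simil_inj (r : R) (d : R * R) : r != 0 -> injective (simil r d).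
Proof.
move=> r0 [x1 y1] [x2 y2] [] /= /(mulfI r0) e1 /(mulfI r0) e2.
by congr pair; [move: e1 | move: e2]; move/addIr.
Qed.

Lemma omega_inj : injective om.
Proof.
move=> u v e; have := lam_omega u v; rewrite -e lam_omega eqxx.
by case: eqP => // _ /eqP; rewrite oner_eq0.
Qed.

Lemma Delta_omega w : D (om w).
Proof. by apply/DeltaP => k; rewrite lam_omega; case: eqP. Qed.

Lemma Delta_comb t p q : 0 <= t <= 1 -> D p -> D q -> D (comb t p q).
Proof.
move=> /andP[t0 t1] /DeltaP Hp /DeltaP Hq; apply/DeltaP => k.
rewrite lam_comb; have := Hp k; have := Hq k; nra.
Qed.

Lemma mid_not_vertex u v w : u != v -> comb (1/2) (om u) (om v) <> om w.
Proof.
move=> uv e; have := lam_omega u w; rewrite -e lam_comb !lam_omega eqxx (negbTE uv).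
case: eqP => _; lra.
Qed.

Definition next (k : vtx) := match k with VA => VB | VB => VC | VC => VA end.
Lemma next_neq k : k != next k. Proof. by case: k. Qed.

Section Inside.
Variables (r : R) (d : R * R).
Hypothesis r0 : 0 < r.
Hypothesis Hin : simil r d @` D `<=` D.

Lemma lam_ge k y : r * lam k y <= lam k (simil r d y).
Proof.
have := lam_simil r d y (om (next k)) k.
rewrite lam_omega (negbTE (next_neq k)) mulr0 subr0.
have /DeltaP/(_ k) : D (simil r d (om (next k))) by apply: Hin; exists (om (next k)) => //; exact: Delta_omega.
lra.
Qed.

Lemma fix_vertex y u : D y -> simil r d y = om u -> y = om u.
Proof.
move=> /DeltaP Dy e; apply: (@lam_eq u) => k ku.
have := lam_ge k y; rewrite e !lam_omega (negbTE ku) => H.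
have : lam k y <= 0 by rewrite -(pmulr_rle0 _ r0).
have := Dy k; lra.
Qed.
End Inside.

Definition Gcond (f g : R * R -> R * R) := forall x, (f @` D) x -> (g @` D) x ->
  exists u v, x = f (om u) /\ x = g (om v).

Lemma overlap (ri : R) di (rj : R) dj u : 0 < ri -> ri <= rj ->
  Gcond (simil ri di) (simil rj dj) ->
  simil ri di (om u) = simil rj dj (om u) -> False.
Proof.
move=> ri0 rij G e.
have rj0 : 0 < rj by lra.
pose p := comb (1/2) (om VA) (om VB).
have Dp : D p by apply: Delta_comb; [lra| exact: Delta_omega | exact: Delta_omega].
have pE : p = comb (1/2) (om VA) (om VB) by [].
clearbody p.
pose z := comb (ri / rj) p (om u).
have Dz : D z.
  apply: Delta_comb => //; last exact: Delta_omega.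
  apply/andP; split; first by apply: divr_ge0; lra.
  by rewrite ler_pdivrMr // mul1r.
have ez : simil rj dj z = simil ri di p.
  have [e1 e2] : ri * ((om u).1 + di.1) = rj * ((om u).1 + dj.1) /\
      ri * ((om u).2 + di.2) = rj * ((om u).2 + dj.2) by move: e; rewrite /simil; case.
  have rjn : rj != 0 by rewrite gt_eqF.
  rewrite /simil /z /comb /=; congr pair.
    have -> : rj * (ri / rj * p.1 + (1 - ri / rj) * (om u).1 + dj.1) = ri * p.1 + rj * ((om u).1 + dj.1) - ri * (om u).1 by field.
    rewrite -e1; ring.
  have -> : rj * (ri / rj * p.2 + (1 - ri / rj) * (om u).2 + dj.2) = ri * p.2 + rj * ((om u).2 + dj.2) - ri * (om u).2 by field.
  rewrite -e2; ring.
have [w [v [e1 _]]] := G (simil ri di p) (ex_intro2 _ _ p Dp erefl) (ex_intro2 _ _ z Dz ez).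
have rin : ri != 0 by rewrite gt_eqF.
have ep := simil_inj rin e1.
rewrite pE in ep; exact: (@mid_not_vertex VA VB w).
Qed.

Lemma two_vertex (ri : R) di (rj : R) dj u v u' v' : 0 < ri -> 0 < rj ->
  Gcond (simil ri di) (simil rj dj) ->
  simil ri di (om v) = simil rj dj (om u) ->
  simil ri di (om v') = simil rj dj (om u') -> u = u' /\ v = v'.
Proof.
move=> ri0 rj0 G e e'.
have rin : ri != 0 by rewrite gt_eqF.
have rjn : rj != 0 by rewrite gt_eqF.
have [vv|vv] := eqVneq v v'.
  subst v'; split => //; apply: omega_inj; apply: (@simil_inj rj dj rjn); by rewrite -e -e'.
exfalso.
pose m := comb (1/2) (om v) (om v').
pose m' := comb (1/2) (om u) (om u').
have Dm : D m by apply: Delta_comb; [lra | exact: Delta_omega | exact: Delta_omega].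
have Dm' : D m' by apply: Delta_comb; [lra | exact: Delta_omega | exact: Delta_omega].
have em : simil rj dj m' = simil ri di m by rewrite !simil_comb e e'.
have [w [_ [e1 _]]] := G (simil ri di m) (ex_intro2 _ _ m Dm erefl) (ex_intro2 _ _ m' Dm' em).
exact: (@mid_not_vertex v v' w vv (simil_inj rin e1)).
Qed.

End Geo.
Lemma foldmax_prop (R : realType) (l : seq R) :
  [/\ 0 <= foldr Num.max 0 l,
      (forall x, x \in l -> x <= foldr Num.max 0 l) &
      ((forall x, x \in l -> x < 1) -> foldr Num.max 0 l < 1)].
Proof.
elim: l => [|a l [IH0 IH1 IH2]] /=; first by split => //; lra.
split.
- by rewrite le_max IH0 orbT.
- move=> x; rewrite inE => /orP[/eqP ->|xl]; first by rewrite le_max lexx.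
  by rewrite le_max IH1 ?orbT.
- move=> H; rewrite gt_max H ?mem_head //= IH2 // => x xl.
  by apply: H; rewrite inE xl orbT.
Qed.

Lemma K_sub (R : realType) (N : nat) (r : 'I_N -> R) (d : 'I_N -> R * R)
    (K : set (R * R)) :
  (forall j, 0 < r j < 1) ->
  (forall j, simil (r j) (d j) @` @Delta R `<=` @Delta R) -> compact K ->
  K = \bigcup_(j in [set: 'I_N]) (simil (r j) (d j) @` K) -> K `<=` @Delta R.
Proof.
move=> Hr Hin cK Keq.
pose rho := foldr Num.max 0 [seq r j | j <- enum 'I_N].
have [rho0 rho_ub rho_lt] := foldmax_prop [seq r j | j <- enum 'I_N].
have rub : forall j, r j <= rho by move=> j; apply: rho_ub; apply: map_f; rewrite mem_enum.
have rlt : rho < 1.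
  apply: rho_lt => x /mapP[j _ ->]; by have /andP[] := Hr j.
have [M HM] : exists M, forall y, K y -> `|y| <= M.
  move: cK => /compact_bounded [M [_ HM]]; exists (M + 1) => y Ky.
  by apply: (HM (M + 1)) => //; lra.
move=> y0 Ky0; apply/DeltaP => k.
pose h (y : R * R) : R := Num.max 0 (- lam k y).
have M0 : 0 <= M by exact: le_trans (normr_ge0 _) (HM _ Ky0).
have hb : forall y, K y -> h y <= 1 + 3 * M.
  move=> y Ky; rewrite /h ge_max; apply/andP; split; first lra.
  have := HM _ Ky; rewrite prod_normE ge_max => /andP[h1 h2].
  have hs : `|y.2 / Num.sqrt 3| <= `|y.2|.
    rewrite normf_div (ger0_norm (ltW (s_gt0 R))) ler_pdivrMr ?s_gt0 //.
    have := s_ge1 R; have := normr_ge0 y.2; nra.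
  have a1 := ler_norm y.1; have a2 := ler_norm (- y.1); rewrite normrN in a2.
  have b1 := ler_norm (y.2 / Num.sqrt 3); have b2 := ler_norm (- (y.2 / Num.sqrt 3)).
  rewrite normrN in b2.
  case: k {h} => /=; lra.
pose S := h @` K.
have hs : has_sup S.
  split; first by exists (h y0), y0.
  by exists (1 + 3 * M) => _ [y Ky <-]; apply: hb.
have up : forall y, K y -> h y <= sup S.
  by move=> y Ky; apply: sup_upper_bound => //; exists y.
have h0 : forall y, 0 <= h y by move=> y; rewrite /h le_max lexx.
have contr : forall y, K y -> h y <= rho * sup S.
  move=> y Ky; move: (Ky); rewrite {1}Keq => -[j _ [x Kx <-]].
  have := lam_ge (Hin j) k x => lg.
  have rj := Hr j; move: rj => /andP[rj0 rj1].
  have hx : - lam k x <= h x by rewrite /h le_max lexx orbT.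
  have hxs := up _ Kx.
  have hx0 := h0 x.
  have e1 : h (simil (r j) (d j) x) <= r j * h x.
    rewrite [h (simil _ _ x)]/h ge_max; apply/andP; split; first by apply: mulr_ge0; lra.
    nra.
  have := rub j; nra.
have le : sup S <= rho * sup S.
  apply: ge_sup; first by exists (h y0), y0.
  by move=> _ [y Ky <-]; apply: contr.
have := up _ Ky0; have := h0 y0.
have : - lam k y0 <= h y0 by rewrite /h le_max lexx orbT.
nra.
Qed.
Section Main.
Variables (R : realType) (N : nat) (r : 'I_N -> R) (d : 'I_N -> R * R) (K : set (R * R)).
Local Notation D := (@Delta R).
Local Notation om := (@omega R).
Local Notation phi j := (simil (r j) (d j)).
Local Notation c := (corner r d K).
Hypothesis Hr : forall j, 0 < r j < 1.
Hypothesis Hin : forall j, phi j @` D `<=` D.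
Hypothesis Hg : forall i j, i != j -> forall x,
          (phi i @` D) x -> (phi j @` D) x ->
          exists u v, x = phi i (om u) /\ x = phi j (om v).
Hypothesis cK : compact K.
Hypothesis Keq : K = \bigcup_(j in [set: 'I_N]) (phi j @` K).

Lemma r0 j : 0 < r j. Proof. by have /andP[] := Hr j. Qed.
Lemma rn0 j : r j != 0. Proof. by rewrite gt_eqF // r0. Qed.

Lemma Ksub : K `<=` D. Proof. exact: K_sub Hr Hin cK Keq. Qed.

Lemma cornerK u : c u != None -> K (om u).
Proof. by rewrite /corner; case: asboolP. Qed.

Lemma Kcorner u : K (om u) -> c u != None.
Proof.
move=> Ku; rewrite /corner; case: asboolP => // _.
case: pickP => // H; exfalso.
move: (Ku); rewrite {1}Keq => -[j _ [x Kx e]].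
have ex := fix_vertex (@r0 j) (@Hin j) (Ksub Kx) e.
by have := H j; rewrite -{1}ex e eqxx.
Qed.

Lemma corner_fix u a : c u = Some a -> phi a (om u) = om u.
Proof.
rewrite /corner; case: asboolP => _; last by case.
by case: pickP => [j /eqP Hj [<-]| _ []].
Qed.

Lemma noSame i j u : i != j -> phi i (om u) <> phi j (om u).
Proof.
move=> ij e; case/orP: (le_total (r i) (r j)) => le.
  exact: overlap (@r0 i) le (Hg ij) e.
by apply: overlap (@r0 j) le (Hg _) (esym e); rewrite eq_sym.
Qed.

Lemma uniqPair i j u v u' v' : i != j -> phi i (om v) = phi j (om u) ->
  phi i (om v') = phi j (om u') -> u = u' /\ v = v'.
Proof. move=> ij; exact: two_vertex (@r0 i) (@r0 j) (Hg ij). Qed.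

Lemma inter i j x : i != j -> (phi i @` K) x -> (phi j @` K) x ->
  exists u v, [/\ x = phi i (om u), x = phi j (om v), K (om u) & K (om v)].
Proof.
move=> ij [y Ky ey] [z Kz ez].
have [u [v [e1 e2]]] := Hg ij (ex_intro2 _ _ y (Ksub Ky) ey) (ex_intro2 _ _ z (Ksub Kz) ez).
have yu : y = om u by apply: (@simil_inj _ (r i) (d i) (@rn0 i)); rewrite ey.
have zv : z = om v by apply: (@simil_inj _ (r j) (d j) (@rn0 j)); rewrite ez -e2.
exists u, v; split => //; [by rewrite -yu | by rewrite -zv].
Qed.

Lemma omega_neq i j u v : i != j -> phi i (om v) = phi j (om u) -> u != v.
Proof. by move=> ij e; apply/eqP => uv; subst v; exact: noSame ij e. Qed.

Definition Coin i j (p : {p : vtx * vtx | p.1 != p.2}) : Prop :=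
  [/\ c (val p).1 != None, c (val p).2 != None &
      phi i (om (val p).2) = phi j (om (val p).1)].

Definition delta0 i j : state :=
  if i == j then QId else
  match pselect (exists p, Coin i j p) with
  | left e => QS (projT1 (cid e))
  | right _ => QExit
  end.

Definition delta (q : state) (ij : 'I_N * 'I_N) : state :=
  match q with
  | QId => delta0 ij.1 ij.2
  | QExit => QExit
  | QS p => if (c (val p).2 == Some ij.1) && (c (val p).1 == Some ij.2) then QS p else QExit
  end.

Lemma delta0_coin i j u v : i != j -> c u != None -> c v != None ->
  phi i (om v) = phi j (om u) -> isS (delta0 i j) u v.
Proof.
move=> ij cu cv e.
have uv := omega_neq ij e.
rewrite /delta0 (negbTE ij); case: pselect => [ex|ne]; last first.
  by exfalso; apply: ne; exists (exist _ (u, v) uv).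
case: (cid ex) => p [_ _ Hp] /=.
have [e1 e2] := uniqPair ij Hp e.
by apply/eqP; move: e1 e2; case: p {Hp} => [[a b] ab] /= -> ->.
Qed.

Lemma isS_delta0 i j u v : isS (delta0 i j) u v ->
  [/\ i != j, c u != None, c v != None & phi i (om v) = phi j (om u)].
Proof.
rewrite /delta0; case: eqP => // /eqP ij.
case: pselect => [ex|//]; case: (cid ex) => [[[a b] ab] H] /= /eqP [<- <-].
by case: H.
Qed.

Lemma exists_delta : topology_automaton r d K delta.
Proof.
split.
  split.
  - move=> i j /=; rewrite /delta0; split; last by move=> ->; rewrite eqxx.
    by case: eqP => // _; case: pselect.
  - move=> i j u v /= /isS_delta0 [ij cu cv e].
    by apply: delta0_coin => //; rewrite eq_sym.
  - by [].
move=> i j ij; split.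
  by move=> u v _ cu cv e /=; apply: delta0_coin.
move=> H /=; rewrite /delta0 (negbTE ij); case: pselect => [ex|//].
exfalso; have [p [h1 h2 h3]] := ex.
have : (phi i @` K `&` phi j @` K) (phi i (om (val p).2)).
  split; first by exists (om (val p).2) => //; exact: cornerK.
  by rewrite h3; exists (om (val p).1) => //; exact: cornerK.
by rewrite H.
Qed.

Section Gen.
Variable dl : state -> 'I_N * 'I_N -> state.
Hypothesis Htop : topology_automaton r d K dl.

Lemma charP i j u v : isS (dl QId (i, j)) u v <->
  [/\ i != j, phi i (om v) = phi j (om u), K (om u) & K (om v)].
Proof.
case: Htop => [[T1 T2 T3] Hc].
split; last first.
  move=> [ij e Ku Kv]; have [Ha _] := Hc i j ij.
  by apply: Ha; [exact: omega_neq ij e | exact: Kcorner | exact: Kcorner |].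
move=> H.
have ij : i != j.
  by apply/eqP => ij; subst j; move: H; have [_ ->] := T1 i i.
have [_ Hb] := Hc i j ij.
case: (pselect (exists x, (phi i @` K) x /\ (phi j @` K) x)) => [[x [x1 x2]]|ne]; last first.
  have E : (phi i @` K `&` phi j @` K) = set0.
    by apply/seteqP; split => // y [y1 y2]; apply: ne; exists y.
  by move: H; rewrite (Hb E).
have [a [b [e1 e2 Ka Kb]]] := inter ij x1 x2.
have eab : phi i (om a) = phi j (om b) by rewrite -e1 -e2.
have [Ha _] := Hc i j ij.
have H' := Ha b a (omega_neq ij eab) (Kcorner Kb) (Kcorner Ka) eab.
move: H H'; case: (dl QId (i, j)) => // p /= /eqP -> /eqP [-> ->].
by split.
Qed.

Lemma gasket : gasket_automaton c dl.
Proof.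
have Htri := proj1 Htop.
split => //.
- move=> u v i j j' /charP [ij e Ku Kv] /charP [ij' e' _ _].
  apply/eqP; apply/negP => /negP jj.
  by apply: (@noSame j j' u jj); rewrite -e e'.
- move=> a b c0; split; [|split].
  + move=> /charP [h1 e1 K1 K2] /charP [h3 e2 K3 K4]; apply/charP; split => //.
    * apply/eqP => bc; subst c0.
      have : om VB = om VA by apply: (@simil_inj _ (r b) (d b) (@rn0 b)); rewrite -e1 -e2.
      by move/omega_inj.
    * by rewrite -e1 -e2.
  + move=> /charP [h1 e1 K1 K2] /charP [h3 e2 K3 K4]; apply/charP; split => //.
    * apply/eqP => ab; subst b.
      have : om VC = om VB by apply: (@simil_inj _ (r a) (d a) (@rn0 a)); rewrite e1 e2.
      by move/omega_inj.
    * by rewrite e1 e2.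
  + move=> /charP [h1 e1 K1 K2] /charP [h3 e2 K3 K4]; apply/charP; split => //.
    * apply/eqP => ac; subst c0.
      have : om VC = om VA by apply: (@simil_inj _ (r a) (d a) (@rn0 a)); rewrite e1 e2.
      by move/omega_inj.
    * by rewrite e1 e2.
have bnd : forall u w g i, c u = Some g -> isS (dl QId (i, g)) u w -> False.
  move=> u w g i cu /charP [ig e Ku Kw].
  have fx := corner_fix cu.
  rewrite fx in e.
  have := fix_vertex (@r0 i) (@Hin i) (Delta_omega R w) e => /omega_inj wu.
  by subst w; apply: (@noSame i g u ig); rewrite e fx.
split.
- by move=> a ca i; split; apply: bnd ca.
- by move=> a ca i; split; apply: bnd ca.
- by move=> a ca i; split; apply: bnd ca.
Qed.
End Gen.
End Main.

Unset Implicit Arguments.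

Theorem lemma4p1 (R : realType) (N : nat) (r : 'I_N -> R) (d : 'I_N -> R * R)
    (K : set (R * R)) :
  fractal_gasket r d K ->
  (exists delta, topology_automaton r d K delta) /\
  (forall delta, topology_automaton r d K delta ->
     gasket_automaton (corner r d K) delta).
Proof.
move=> [Hr Hin Hg [cK _ Keq]]; split.
  by exists (delta r d K); apply: exists_delta.
by move=> dl Ht; apply: gasket Ht.
Qed.
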